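(* Consider the Rayleigh fading channel $y=hx+v$, $v\sim\mathcal{CN}(0,1)$, perfect CSI at transmitter and receiver, $|h|^2$ exponential with unit mean. Let $\mathcal{A}(\mathrm{SNR})$ be a variable PAPR with $\mathcal{A}(\mathrm{SNR})\to\infty$ and $\mathcal{A}(\mathrm{SNR})\,\mathrm{SNR}\to0$ as $\mathrm{SNR}\to0$, and such that the peak constraint is effective ($\mathcal{A}(\mathrm{SNR})\,\mathrm{SNR}<1/\lambda_0$, where $\mathrm{SNR}=\mathbf{E}[[1/\lambda_0-1/|h|^2]^+]$). Let $\lambda$ be determined by $\mathrm{SNR}=\mathbf{E}[\min\{[1/\lambda-1/|h|^2]^+,\mathcal{A}(\mathrm{SNR})\,\mathrm{SNR}\}]$ with $\lambda\mathcal{A}(\mathrm{SNR})\mathrm{SNR}<1$, define $$l(\mathrm{SNR})=\frac{1}{\frac1\lambda-\mathcal{A}(\mathrm{SNR})\,\mathrm{SNR}}-\lambda,$$ and suppose $l_0=\lim_{\mathrm{SNR}\to0}l(\mathrm{SNR})$ exists in $[0,\infty]$. Let $C(\mathrm{SNR})$ be the capacity under average power constraint $\mathrm{SNR}$ and peak power constraint $\mathcal{A}(\mathrm{SNR})\,\mathrm{SNR}$. Then, as $\mathrm{SNR}\to0$, $$C(\mathrm{SNR})\approx\begin{cases}\mathrm{SNR}\log\frac{1}{\mathrm{SNR}}, & l_0>0,\\ \mathrm{SNR}\log\mathcal{A}(\mathrm{SNR}), & l_0=0,\end{cases}$$ where $f\approx g$ means $\lim_{\mathrm{SNR}\to0}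f(\mathrm{SNR})/g(\mathrm{SNR})=1$.
   Context: $[u]^+=\max\{0,u\}$; logarithms are natural. $C(\mathrm{SNR})=\sup\mathbf{E}[\log(1+P(h)|h|^2)]$ over measurable $P(h)\ge0$ with $\mathbf{E}[P(h)]\le\mathrm{SNR}$ and $\max_hP(h)\le\mathcal{A}(\mathrm{SNR})\,\mathrm{SNR}$; it equals $\int_\lambda^\infty\min\{\log(t/\lambda),\log(1+\mathcal{A}(\mathrm{SNR})\mathrm{SNR}\,t)\}e^{-t}dt$. *)

(* Defs.v *)
From Stdlib Require Import Reals Lra.
Open Scope R_scope.

Definition improper_int (f : R -> R) (a L : R) : Prop :=
  (forall b, a <= b -> inhabited (Riemann_integrable f a b)) /\
  (forall eps, 0 < eps -> exists M, forall b (pr : Riemann_integrable f a b),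
      M < b -> Rabs (RiemannInt pr - L) < eps).

(* Expectation over |h|^2 ~ Exp(1): E[g(|h|^2)] = int_0^oo g(t) e^{-t} dt *)
Definition exp_expect (g : R -> R) (L : R) : Prop :=
  improper_int (fun t => g t * exp (- t)) 0 L.

Definition pos_part (u : R) : R := Rmax 0 u.

Definition lim0 (f : R -> R) (L : R) : Prop :=
  forall eps, 0 < eps -> exists d, 0 < d /\
    forall x, 0 < x < d -> Rabs (f x - L) < eps.

Definition lim0_infty (f : R -> R) : Prop :=
  forall M, exists d, 0 < d /\ forall x, 0 < x < d -> M < f x.

(* Capacity with average power snr and peak power Aval*snr, via the
   closed form from the context:
   C = int_lam^oo min{log(t/lam), log(1 + Aval snr t)} e^{-t} dt,
   where lam is the water level determined by snr (see theorem). *)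
Definition capacity_is (snr Aval lam Cval : R) : Prop :=
  improper_int
    (fun t => Rmin (ln (t / lam)) (ln (1 + Aval * snr * t)) * exp (- t))
    lam Cval.

(* Main.v *)
Require Import Defs.
From Stdlib Require Import Reals Lra.
From Coquelicot Require Import Coquelicot.
Open Scope R_scope.

Lemma div_le (x y z w : R) : 0 < y -> 0 < w -> x * w <= z * y -> x / y <= z / w.
Proof.
  intros Hy Hw H.
  assert (E : x / y - z / w = (x * w - z * y) * / (y * w)) by (field; lra).
  assert (0 < / (y * w)) by (apply Rinv_0_lt_compat; nra).
  assert ((x * w - z * y) * / (y * w) <= 0) by nra. lra.
Qed.

Lemma ln_le_xm1 (y : R) : 0 < y -> ln y <= y - 1.
Proof. intros Hy. pose proof (exp_ineq1_le (ln y)). rewrite exp_ln in H; lra. Qed.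

Lemma ln1p_bounds (x : R) : 0 <= x -> x - x * x <= ln (1 + x) <= x.
Proof.
  intros Hx. split.
  - assert (H := ln_le_xm1 (/ (1 + x)) ltac:(apply Rinv_0_lt_compat; lra)).
    rewrite ln_Rinv in H by lra.
    assert (E : / (1 + x) - 1 = - (x / (1 + x))) by (field; lra).
    assert (x / (1 + x) >= x - x * x).
    { apply Rle_ge. rewrite <- (Rdiv_1_r (x - x*x)). apply div_le; nra. }
    lra.
  - pose proof (ln_le_xm1 (1 + x)). lra.
Qed.


Lemma pw_zero (lam a t : R) (Hlam : 0 < lam) (Ha : 0 < a) : 0 < t <= lam -> Rmin (pos_part (/ lam - / t)) a = 0.
Proof.
  intros Ht. assert (/ lam <= / t) by (apply Rinv_le_contravar; lra).
  unfold pos_part. rewrite Rmax_left by lra. apply Rmin_left. lra.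
Qed.

Lemma pw_nonneg (lam a t : R) (Ha : 0 < a) : 0 <= Rmin (pos_part (/ lam - / t)) a.
Proof. unfold pos_part. apply Rmin_glb. apply Rmax_l. lra. Qed.

Lemma pw_lea (lam a t : R) : Rmin (pos_part (/ lam - / t)) a <= a.
Proof. apply Rmin_r. Qed.

Lemma pw_pp (lam a t : R) (Hlam : 0 < lam) (Ha : 0 < a) : lam < t -> pos_part (/ lam - / t) = (t - lam) / (lam * t).
Proof.
  intros Ht. assert (E : / lam - / t = (t - lam) / (lam * t)) by (field; lra).
  rewrite E. unfold pos_part. apply Rmax_right.
  apply Rlt_le. apply Rdiv_lt_0_compat; nra.
Qed.

Lemma pw_lo (lam a t : R) (Hlam : 0 < lam) (Ha : 0 < a) : lam < t <= lam + 1 ->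
  (t - lam) * Rmin (/ (lam * (lam + 1))) a <= Rmin (pos_part (/ lam - / t)) a.
Proof.
  intros Ht. rewrite (pw_pp lam a t Hlam Ha) by lra.
  assert (Hq0 : 0 <= Rmin (/ (lam * (lam + 1))) a).
  { apply Rmin_glb; [apply Rlt_le, Rinv_0_lt_compat; nra | lra]. }
  apply Rmin_glb.
  - apply Rle_trans with ((t - lam) * / (lam * (lam + 1))).
    + apply Rmult_le_compat_l. lra. apply Rmin_l.
    + rewrite <- (Rdiv_def (t - lam)). apply div_le; try nra. assert (0 <= lam * (lam + 1 - t)) by (apply Rmult_le_pos; lra). nra.
  - apply Rle_trans with ((t - lam) * a).
    + apply Rmult_le_compat_l. lra. apply Rmin_r.
    + nra.
Qed.

Lemma pw_hi (lam a t : R) (Hlam : 0 < lam) (Ha : 0 < a) : lam < t ->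
  Rmin (pos_part (/ lam - / t)) a <= (1 + (t - lam)) * Rmin (/ (lam * (lam + 1))) a.
Proof.
  intros Ht. rewrite (pw_pp lam a t Hlam Ha) by lra.
  unfold Rmin at 2. destruct (Rle_dec (/ (lam * (lam + 1))) a).
  - apply Rle_trans with ((t - lam) / (lam * t)). apply Rmin_l.
    rewrite <- (Rdiv_def (1 + (t - lam))). apply div_le; try nra. assert (0 <= lam * (lam + (t-lam)*(t-lam))) by (apply Rmult_le_pos; nra). nra.
  - apply Rle_trans with a. apply Rmin_r. nra.
Qed.

Lemma pw_C (lam a t : R) (Hlam : 0 < lam) (Ha : 0 < a) : 1 <= lam -> lam * a < 1 -> lam < t ->
  Rabs (Rmin (ln (t / lam)) (ln (1 + a * t)) - lam * Rmin (pos_part (/ lam - / t)) a)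
  <= (t - lam) * (1 + (t - lam)) ^ 2 * Rmin (/ (lam * (lam + 1))) a.
Proof.
  intros H1 Hla Ht. rewrite (pw_pp lam a t Hlam Ha) by lra.
  set (U := (t - lam) / (lam * t)).
  set (p := Rmin U a).
  set (q := Rmin (/ (lam * (lam + 1))) a).
  assert (HU : U * (lam * t) = t - lam) by (unfold U; field; lra).
  assert (Hp0 : 0 <= p).
  { unfold p, U. apply Rmin_glb; [apply Rlt_le, Rdiv_lt_0_compat; nra | lra]. }
  assert (Hq0 : 0 <= q).
  { apply Rmin_glb; [apply Rlt_le, Rinv_0_lt_compat; nra | lra]. }
  assert (Hr : Rmin (ln (t / lam)) (ln (1 + a * t)) = ln (1 + t * p)).
  { unfold p, Rmin at 2. destruct (Rle_dec U a).
    - assert (E : 1 + t * U = t / lam) by (unfold U; field; lra).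
      rewrite E. apply Rmin_left. apply ln_le.
      apply Rdiv_lt_0_compat; lra. rewrite <- E. nra.
    - assert (E : 1 + t * U = t / lam) by (unfold U; field; lra).
      rewrite Rmin_right. f_equal. ring.
      apply ln_le. nra. rewrite <- E. nra. }
  rewrite Hr.
  assert (Hpq : p <= (1 + (t - lam)) * q).
  { unfold p, q, U. pose proof (pw_hi lam a t Hlam Ha Ht) as HH. rewrite (pw_pp lam a t Hlam Ha) in HH by lra. exact HH. }
  set (x := t * p).
  assert (Hx0 : 0 <= x) by (unfold x; nra).
  assert (Hx1 : x <= (t - lam) / lam).
  { unfold x. apply Rle_trans with (t * U). apply Rmult_le_compat_l. lra. apply Rmin_l.
    unfold U. right. field. lra. }
  assert (Hx1' : x * lam <= t - lam).
  { apply Rmult_le_compat_r with (r := lam) in Hx1. 2: lra.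
    unfold Rdiv in Hx1. rewrite Rmult_assoc, Rinv_l in Hx1 by lra. lra. }
  assert (Hx2 : x <= t * ((1 + (t - lam)) * q)) by (unfold x; apply Rmult_le_compat_l; lra).
  pose proof (ln1p_bounds x Hx0) as [L1 L2].
  assert (Exp : x - lam * p = (t - lam) * p) by (unfold x; ring).
  set (u := t - lam) in *.
  assert (Hu : 0 < u) by (unfold u; lra).
  assert (B1 : u * p <= u * (1 + u) ^ 2 * q).
  { apply Rle_trans with (u * ((1 + u) * q)). apply Rmult_le_compat_l; lra.
    assert (0 <= u * (1+u) * q) by (apply Rmult_le_pos; [nra|lra]). nra. }
  assert (B2 : x * x <= u * (1 + u) ^ 2 * q).
  {
    assert (S1 : x * x * lam <= u * (t * ((1 + u) * q))).
    { assert (x * x * lam = (x * lam) * x) by ring. rewrite H.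
      apply Rmult_le_compat; try nra. }
    assert (S2 : t <= lam * (1 + u)) by (unfold u; nra).
    assert (S3 : u * (t * ((1 + u) * q)) <= u * (lam * (1 + u) * ((1 + u) * q))).
    { apply Rmult_le_compat_l. lra. apply Rmult_le_compat_r. nra. exact S2. }
    assert (S4 : x * x * lam <= (u * (1 + u) ^ 2 * q) * lam) by nra.
    apply Rmult_le_reg_r with lam. lra. exact S4. }
  apply Rabs_le. split; nra.
Qed.


Lemma imp_ex f a L b : improper_int f a L -> a <= b -> ex_RInt f a b.
Proof. intros [H _] Hb. destruct (H b Hb) as [pr]. exact (ex_RInt_Reals_1 _ _ _ pr). Qed.

Lemma imp_lim f a L eps : improper_int f a L -> 0 < eps ->
  exists M, forall b, M < b -> a <= b -> Rabs (RInt f a b - L) < eps.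
Proof.
  intros [H1 H2] He. destruct (H2 eps He) as [M HM]. exists M. intros b Hb Hab.
  destruct (H1 b Hab) as [pr]. rewrite (RInt_Reals _ _ _ pr). apply HM. exact Hb.
Qed.

Lemma imp_le f a L U M0 : improper_int f a L ->
  (forall b, M0 < b -> a <= b -> RInt f a b <= U) -> L <= U.
Proof.
  intros H HU. destruct (Rle_or_lt L U) as [|Hc]; auto.
  destruct (imp_lim f a L (L - U) H) as [M HM]. lra.
  set (b := Rmax (Rmax M M0) a + 1).
  assert (M < b /\ M0 < b /\ a <= b) as [h1 [h2 h3]].
  { unfold b. pose proof (Rmax_l (Rmax M M0) a). pose proof (Rmax_r (Rmax M M0) a).
    pose proof (Rmax_l M M0). pose proof (Rmax_r M M0). lra. }
  specialize (HM b h1 h3). specialize (HU b h2 h3).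
  apply Rabs_def2 in HM. lra.
Qed.

Lemma imp_ge f a L U M0 : improper_int f a L ->
  (forall b, M0 < b -> a <= b -> U <= RInt f a b) -> U <= L.
Proof.
  intros H HU. destruct (Rle_or_lt U L) as [|Hc]; auto.
  destruct (imp_lim f a L (U - L) H) as [M HM]. lra.
  set (b := Rmax (Rmax M M0) a + 1).
  assert (M < b /\ M0 < b /\ a <= b) as [h1 [h2 h3]].
  { unfold b. pose proof (Rmax_l (Rmax M M0) a). pose proof (Rmax_r (Rmax M M0) a).
    pose proof (Rmax_l M M0). pose proof (Rmax_r M M0). lra. }
  specialize (HM b h1 h3). specialize (HU b h2 h3).
  apply Rabs_def2 in HM. lra.
Qed.

Lemma two_lim f g a1 a2 L1 L2 k Y M0 : improper_int f a1 L1 -> improper_int g a2 L2 -> 0 <= k ->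
  (forall b, M0 < b -> a1 <= b -> a2 <= b -> Rabs (RInt f a1 b - k * RInt g a2 b) <= Y) ->
  Rabs (L1 - k * L2) <= Y.
Proof.
  intros Hf Hg Hk HY. destruct (Rle_or_lt (Rabs (L1 - k * L2)) Y) as [|Hc]; auto.
  set (eps := (Rabs (L1 - k * L2) - Y) / (2 * (1 + k))).
  assert (He : 0 < eps) by (unfold eps; apply Rdiv_lt_0_compat; lra).
  destruct (imp_lim f a1 L1 eps Hf He) as [M1 HM1].
  destruct (imp_lim g a2 L2 eps Hg He) as [M2 HM2].
  set (b := Rmax (Rmax M1 M2) (Rmax M0 (Rmax a1 a2)) + 1).
  assert (M1 < b /\ M2 < b /\ M0 < b /\ a1 <= b /\ a2 <= b) as [h1 [h2 [h3 [h4 h5]]]].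
  { unfold b. pose proof (Rmax_l (Rmax M1 M2) (Rmax M0 (Rmax a1 a2))).
    pose proof (Rmax_r (Rmax M1 M2) (Rmax M0 (Rmax a1 a2))).
    pose proof (Rmax_l M1 M2). pose proof (Rmax_r M1 M2).
    pose proof (Rmax_l M0 (Rmax a1 a2)). pose proof (Rmax_r M0 (Rmax a1 a2)).
    pose proof (Rmax_l a1 a2). pose proof (Rmax_r a1 a2). lra. }
  specialize (HM1 b h1 h4). specialize (HM2 b h2 h5). specialize (HY b h3 h4 h5).
  set (X := RInt f a1 b) in *. set (Z := RInt g a2 b) in *.
  assert (T : Rabs (L1 - k * L2) <= Rabs (X - k * Z) + Rabs (X - L1) + k * Rabs (Z - L2)).
  { replace (L1 - k * L2) with ((X - k * Z) - (X - L1) + k * (Z - L2)) by ring.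
    eapply Rle_trans. apply Rabs_triang. rewrite Rabs_mult, (Rabs_pos_eq k Hk).
    apply Rplus_le_compat_r. eapply Rle_trans. apply Rabs_triang. rewrite Rabs_Ropp. lra. }
  assert (k * Rabs (Z - L2) <= k * eps) by (apply Rmult_le_compat_l; lra).
  assert (eps * (2 * (1 + k)) = Rabs (L1 - k * L2) - Y) by (unfold eps; field; lra).
  nra.
Qed.

Lemma RInt_deriv (F f : R -> R) a b : (forall x, is_derive F x (f x)) -> (forall x, continuous f x) ->
  RInt f a b = F b - F a.
Proof. intros. apply is_RInt_unique. apply (is_RInt_derive F f a b); auto. Qed.

Ltac contD := intro; apply (ex_derive_continuous (K:=R_AbsRing) (V:=R_NormedModule)); auto_derive; auto.
Lemma exR (f : R -> R) a b : (forall x, ex_derive f x) -> ex_RInt f a b.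
Proof.
  intros H. apply (ex_RInt_continuous (V:=R_CompleteNormedModule)). intros z _.
  exact (ex_derive_continuous (K:=R_AbsRing) (V:=R_NormedModule) f z (H z)).
Qed.
Lemma RInt_lin (f g : R -> R) (k a b : R) : ex_RInt f a b -> ex_RInt g a b ->
  RInt (fun t => f t - k * g t) a b = RInt f a b - k * RInt g a b.
Proof.
  intros Hf Hg. apply is_RInt_unique.
  apply (is_RInt_ext (fun t => minus (f t) (scal k (g t)))).
  intros; reflexivity.
  apply (is_RInt_minus (V:=R_NormedModule)). apply (RInt_correct (V:=R_CompleteNormedModule)); exact Hf.
  apply (is_RInt_scal (V:=R_NormedModule)). apply (RInt_correct (V:=R_CompleteNormedModule)); exact Hg.
Qed.
Lemma ex_lin (f g : R -> R) (k a b : R) : ex_RInt f a b -> ex_RInt g a b ->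
  ex_RInt (fun t => f t - k * g t) a b.
Proof. intros Hf Hg. eexists. apply is_RInt_ext with (fun t => minus (f t) (scal k (g t))).
  intros; reflexivity.
  apply (is_RInt_minus (V:=R_NormedModule)). apply (RInt_correct (V:=R_CompleteNormedModule)); exact Hf.
  apply (is_RInt_scal (V:=R_NormedModule)). apply (RInt_correct (V:=R_CompleteNormedModule)); exact Hg.
Qed.
Ltac toR := match goal with |- ?x = ?y => change (@eq R x y) end.


Lemma core (s lam a Cv : R) : 0 < s -> 0 < lam -> 0 < a -> lam * a < 1 ->
 exp_expect (fun t => Rmin (pos_part (/ lam - / t)) a) s ->
 improper_int (fun t => Rmin (ln (t / lam)) (ln (1 + a * t)) * exp (- t)) lam Cv ->
 (1 - 2 * exp (-1)) * Rmin (/(lam*(lam+1))) a * exp(-lam) <= s /\ s <= a * exp(-lam) /\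
 (1 <= lam -> Rabs (Cv - lam * s) <= 11 * Rmin (/(lam*(lam+1))) a * exp(-lam)).
Proof.
  intros Hs Hl Ha Hla HS HC.
  unfold exp_expect in HS.
  set (P := fun t => Rmin (pos_part (/ lam - / t)) a) in *.
  set (fS := fun t => P t * exp (- t)) in *.
  set (fC := fun t => Rmin (ln (t / lam)) (ln (1 + a * t)) * exp (- t)) in *.
  set (q := Rmin (/(lam*(lam+1))) a).
  assert (Hq0 : 0 <= q).
  { apply Rmin_glb; [apply Rlt_le, Rinv_0_lt_compat; nra | lra]. }
  assert (HexS2 : forall b, lam <= b -> ex_RInt fS lam b).
  { intros b Hb. apply (ex_RInt_Chasles_2 (V:=R_CompleteNormedModule)) with 0. lra. apply (imp_ex _ _ _ _ HS). lra. }
  assert (H0 : forall b, lam <= b -> RInt fS 0 b = RInt fS lam b).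
  { intros b Hb. rewrite <- (RInt_Chasles (V:=R_CompleteNormedModule) fS 0 lam b).
    2: apply (imp_ex _ _ _ _ HS); lra. 2: apply HexS2; lra.
    rewrite (RInt_ext (V:=R_CompleteNormedModule) fS (fun _ => 0)). rewrite (RInt_const (V:=R_CompleteNormedModule)).
    unfold plus, scal; simpl. unfold mult; simpl. lra.
    intros x. rewrite Rmin_left, Rmax_right by lra. intros Hx.
    unfold fS, P. rewrite pw_zero; lra. }
  assert (Hexp : forall b, ex_RInt (fun t => a * exp (- t)) lam b).
  { intros b. apply exR; intro; auto_derive; auto. }
  split; [|split].
  -
    apply (imp_ge _ _ _ _ (lam + 1) HS). intros b Hb _.
    rewrite H0 by lra.
    rewrite <- (RInt_Chasles (V:=R_CompleteNormedModule) fS lam (lam + 1) b).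
    2: apply HexS2; lra. 2: apply (ex_RInt_Chasles_2 (V:=R_CompleteNormedModule)) with lam; [lra | apply HexS2; lra].
    assert (G1 : 0 <= RInt fS (lam + 1) b).
    { apply RInt_ge_0. lra. apply (ex_RInt_Chasles_2 (V:=R_CompleteNormedModule)) with lam; [lra | apply HexS2; lra].
      intros x Hx. unfold fS. apply Rmult_le_pos. apply pw_nonneg; lra. apply Rlt_le, exp_pos. }
    assert (G2 : RInt (fun t => q * (t - lam) * exp (- t)) lam (lam + 1) <= RInt fS lam (lam + 1)).
    { apply RInt_le. lra. apply exR; intro; auto_derive; auto. apply HexS2; lra.
      intros x Hx. unfold fS, P. apply Rmult_le_compat_r. apply Rlt_le, exp_pos.
      rewrite Rmult_comm. apply pw_lo; lra. }
    rewrite (RInt_deriv (fun t => - q * (t - lam + 1) * exp (- t))) in G2.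
    2: intro x; auto_derive; auto; ring. 2: contD.
    replace (- q * (lam + 1 - lam + 1) * exp (- (lam + 1))) with (- 2 * q * (exp (- lam) * exp (-1))) in G2
      by (rewrite <- exp_plus; replace (- lam + -1) with (- (lam + 1)) by ring; ring).
    change (plus ?x ?y) with (x + y). lra.
  - apply (imp_le _ _ _ _ lam HS). intros b Hb _.
    rewrite H0 by lra.
    apply Rle_trans with (RInt (fun t => a * exp (- t)) lam b).
    + apply RInt_le. lra. apply HexS2; lra. apply Hexp.
      intros x Hx. unfold fS, P. apply Rmult_le_compat_r. apply Rlt_le, exp_pos. apply pw_lea.
    + rewrite (RInt_deriv (fun t => - a * exp (- t))).
      2: intro x; auto_derive; auto; ring. 2: contD.
      pose proof (exp_pos (- b)). nra.
  - intros H1.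
    apply (two_lim _ _ _ _ _ _ _ _ lam HC HS). lra.
    intros b Hb _ _. rewrite H0 by lra.
    set (h := fun t => fC t - lam * fS t).
    assert (HexC : ex_RInt fC lam b) by (apply (imp_ex _ _ _ _ HC); lra).
    assert (Exh : ex_RInt h lam b) by (apply ex_lin; [exact HexC | apply HexS2; lra]).
    assert (Eh : RInt h lam b = RInt fC lam b - lam * RInt fS lam b)
      by (apply RInt_lin; [exact HexC | apply HexS2; lra]).
    rewrite <- Eh.
    set (g := fun t => q * ((t - lam) * (1 + (t - lam)) ^ 2) * exp (- t)).
    assert (Hpw : forall x, lam < x < b -> Rabs (h x) <= g x).
    { intros x Hx. unfold h, g, fC, fS, P.
      replace (Rmin (ln (x / lam)) (ln (1 + a * x)) * exp (- x) -
               lam * (Rmin (pos_part (/ lam - / x)) a * exp (- x)))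
        with ((Rmin (ln (x / lam)) (ln (1 + a * x)) - lam * Rmin (pos_part (/ lam - / x)) a) * exp (- x))
        by ring.
      rewrite Rabs_mult, (Rabs_pos_eq (exp (- x))) by (apply Rlt_le, exp_pos).
      apply Rmult_le_compat_r. apply Rlt_le, exp_pos.
      pose proof (pw_C lam a x Hl Ha H1 Hla (proj1 Hx)). unfold q. lra. }
    set (Q := fun u => u ^ 3 + 5 * u ^ 2 + 11 * u + 11).
    assert (HG : RInt g lam b = q * (11 * exp (- lam) - Q (b - lam) * exp (- b))).
    { rewrite (RInt_deriv (fun t => - q * Q (t - lam) * exp (- t))).
      unfold Q. toR. replace (lam - lam) with 0 by ring. ring.
      intro x; unfold g, Q; auto_derive; auto; ring. unfold g; contD. }
    assert (HGn : RInt (fun t => - g t) lam b = - (q * (11 * exp (- lam) - Q (b - lam) * exp (- b)))).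
    { rewrite (RInt_deriv (fun t => q * Q (t - lam) * exp (- t))).
      unfold Q. toR. replace (lam - lam) with 0 by ring. ring.
      intro x; unfold g, Q; auto_derive; auto; ring. unfold g; contD. }
    assert (HQ : 0 <= q * (Q (b - lam) * exp (- b))).
    { apply Rmult_le_pos. lra. apply Rmult_le_pos. unfold Q.
      assert (0 <= b - lam) by lra. pose proof (pow_le (b - lam) 3 H). pose proof (pow_le (b - lam) 2 H). lra.
      apply Rlt_le, exp_pos. }
    apply Rabs_le. split.
    + apply Rle_trans with (RInt (fun t => - g t) lam b).
      * rewrite HGn. nra.
      * apply RInt_le. lra. apply exR; intro; unfold g; auto_derive; auto. exact Exh.
        intros x Hx. pose proof (Hpw x Hx). pose proof (Rle_abs (h x)). pose proof (Rle_abs (- h x)). rewrite Rabs_Ropp in *. lra.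
    + apply Rle_trans with (RInt g lam b).
      * apply RInt_le. lra. exact Exh. apply exR; intro; unfold g; auto_derive; auto.
        intros x Hx. pose proof (Hpw x Hx). pose proof (Rle_abs (h x)). pose proof (Rle_abs (- h x)). rewrite Rabs_Ropp in *. lra.
      * rewrite HG. nra.
Qed.


Lemma combine (s lam C T K D eps : R) : 0 < s -> 1 <= lam -> lam <= T -> T <= lam + D -> 0 <= D ->
  Rabs (C - lam * s) <= K * s -> (K + D) / lam < eps -> Rabs (C / (s * T) - 1) < eps.
Proof.
  intros Hs Hl HT1 HT2 HD HC He.
  assert (E : C / (s * T) - 1 = ((C - lam * s) + s * (lam - T)) / (s * T)) by (field; lra).
  rewrite E. unfold Rdiv. rewrite Rabs_mult, (Rabs_pos_eq (/ (s * T))).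
  2: apply Rlt_le, Rinv_0_lt_compat; nra.
  assert (H1 : Rabs (C - lam * s + s * (lam - T)) <= (K + D) * s).
  { eapply Rle_trans. apply Rabs_triang. rewrite Rabs_mult, (Rabs_pos_eq s) by lra.
    rewrite (Rabs_left1 (lam - T)) by lra. assert (s * (- (lam - T)) <= s * D) by (apply Rmult_le_compat_l; lra). nra. }
  assert (H2 : / (s * T) <= / (s * lam)) by (apply Rinv_le_contravar; nra).
  assert (H3 : (K + D) * s * / (s * lam) = (K + D) / lam) by (field; lra).
  assert (0 <= / (s * T)) by (apply Rlt_le, Rinv_0_lt_compat; nra).
  assert (0 <= K + D) by (pose proof (Rabs_pos (C - lam * s)); nra).
  apply Rle_lt_trans with ((K + D) * s * / (s * lam)).
  - apply Rle_trans with ((K + D) * s * / (s * T)). apply Rmult_le_compat_r; lra.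
    apply Rmult_le_compat_l. nra. exact H2.
  - lra.
Qed.

Lemma ln_le_sqrt (y : R) : 0 < y -> ln y <= 2 * sqrt y.
Proof.
  intros Hy. assert (Hs : 0 < sqrt y) by (apply sqrt_lt_R0; lra).
  pose proof (exp_ineq1_le (ln (sqrt y))). rewrite exp_ln in H by lra.
  assert (E : ln y = 2 * ln (sqrt y)) by (rewrite <- (sqrt_sqrt y) at 1 by lra; rewrite ln_mult by lra; ring). lra.
Qed.

Lemma growth (c eps : R) : 0 <= c -> 0 < eps -> exists M, 1 <= M /\
  forall x, M <= x -> (c + 2 * ln (x + 1)) / x < eps.
Proof.
  intros Hc He. set (m := 16 / eps).
  assert (Hm : 0 < m) by (unfold m; apply Rdiv_lt_0_compat; lra).
  exists (Rmax 1 (4 * (c + 4 * m) / eps + 1)). split. apply Rmax_l.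
  intros x Hx. pose proof (Rmax_l 1 (4 * (c + 4 * m) / eps + 1)).
  pose proof (Rmax_r 1 (4 * (c + 4 * m) / eps + 1)).
  assert (Hx1 : 1 <= x) by lra.
  assert (Hx2 : 4 * (c + 4 * m) / eps < x) by lra.
  assert (Hx3 : 4 * (c + 4 * m) < eps * x).
  { apply Rmult_lt_compat_r with (r := eps) in Hx2; [|lra].
    unfold Rdiv in Hx2. rewrite Rmult_assoc, Rinv_l in Hx2 by lra. lra. }
  set (z := sqrt (x + 1)).
  assert (Hz : z * z = x + 1) by (apply sqrt_sqrt; lra).
  assert (Hz0 : 0 <= z) by apply sqrt_pos.
  assert (L : ln (x + 1) <= 2 * z) by (apply ln_le_sqrt; lra).
  assert (Z : m * z <= (x + 1) + m * m / 4) by (pose proof (Rle_0_sqr (z - m / 2)); unfold Rsqr in *; nra).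
  assert (Hme : m * eps = 16) by (unfold m; field; lra).
  assert (Z2 : 4 * z <= eps * (x + 1) / 4 + m) by nra.
  apply (Rmult_lt_reg_r x). lra. unfold Rdiv. rewrite Rmult_assoc, Rinv_l by lra.
  nra.
Qed.

Lemma finish (s0 : R) (lam C T : R -> R) (K c0 : R) : 0 < s0 -> 0 <= K -> 0 <= c0 ->
  (forall M, exists d, 0 < d /\ forall s, 0 < s < d -> M <= lam s) ->
  (forall s, 0 < s < s0 -> 1 <= lam s ->
     (lam s <= T s <= lam s + (c0 + 2 * ln (lam s + 1))) /\ Rabs (C s - lam s * s) <= K * s) ->
  lim0 (fun s => C s / (s * T s)) 1.
Proof.
  intros Hs0 HK Hc0 Hinf Hb eps He.
  destruct (growth (K + c0) eps ltac:(lra) He) as [M [HM1 HM]].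
  destruct (Hinf M) as [d [Hd Hd']].
  exists (Rmin d s0). split. apply Rmin_glb_lt; lra.
  intros s Hs. pose proof (Rmin_l d s0). pose proof (Rmin_r d s0).
  assert (HlM : M <= lam s) by (apply Hd'; lra).
  destruct (Hb s ltac:(lra) ltac:(lra)) as [[T1 T2] HC].
  assert (0 <= ln (lam s + 1)) by (apply Rlt_le; rewrite <- ln_1; apply ln_increasing; lra).
  apply (combine s (lam s) (C s) (T s) K (c0 + 2 * ln (lam s + 1))); try lra.
  replace (K + (c0 + 2 * ln (lam s + 1))) with (K + c0 + 2 * ln (lam s + 1)) by ring.
  apply HM. lra.
Qed.


Lemma ln_upper (Y x K0 : R) : 0 < Y -> 0 < K0 -> 0 < x -> Y <= (x + 1) ^ 2 * exp x / K0 ->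
  ln Y <= x + (- ln K0 + 2 * ln (x + 1)).
Proof.
  intros HY HK Hx H. apply Rle_trans with (ln ((x + 1) ^ 2 * exp x / K0)).
  apply ln_le; auto.
  unfold Rdiv. rewrite !ln_mult, ln_Rinv, ln_exp; try lra.
  replace ((x + 1) ^ 2) with ((x + 1) * (x + 1)) by ring. rewrite ln_mult by lra. lra.
  all: try apply Rinv_0_lt_compat; try apply exp_pos; try (apply pow_lt; lra); try lra.
  apply Rmult_lt_0_compat. apply pow_lt; lra. apply exp_pos.
Qed.

Lemma ln_lower (Y x : R) : exp x <= Y -> x <= ln Y.
Proof. intros H. rewrite <- (ln_exp x). apply ln_le. apply exp_pos. exact H. Qed.

Lemma kap_pos : 0 < 1 - 2 * exp (-1) < 1.
Proof.
  pose proof (exp_ineq1 1 ltac:(lra)). pose proof (exp_pos (-1)).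
  assert (exp (-1) * exp 1 = 1) by (rewrite <- exp_plus; replace (-1 + 1) with 0 by ring; apply exp_0).
  nra.
Qed.


Theorem theorem2
  (A lam0 lam C : R -> R) (s0 : R) (Hs0 : 0 < s0)
  (Hlam0 : forall s, 0 < s < s0 -> 0 < lam0 s /\
     exp_expect (fun t => pos_part (/ lam0 s - / t)) s)
  (Heff : forall s, 0 < s < s0 -> A s * s < / lam0 s)
  (Hlam : forall s, 0 < s < s0 -> 0 < lam s /\
     exp_expect (fun t => Rmin (pos_part (/ lam s - / t)) (A s * s)) s /\
     lam s * A s * s < 1)
  (HC : forall s, 0 < s < s0 -> capacity_is s (A s) (lam s) (C s))
  (HA : lim0_infty A)
  (HAs : lim0 (fun s => A s * s) 0) :
  let l := fun s => / (/ lam s - A s * s) - lam s in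
  ((exists l0, 0 < l0 /\ lim0 l l0) \/ lim0_infty l ->
     lim0 (fun s => C s / (s * ln (/ s))) 1) /\
  (lim0 l 0 ->
     lim0 (fun s => C s / (s * ln (A s))) 1).
Proof.
  intros l.
  set (kap := 1 - 2 * exp (-1)). pose proof kap_pos as Hkap. fold kap in Hkap.
  destruct (HA 0) as [dA [HdA HA0]].
  set (s1 := Rmin s0 dA).
  assert (Hs1 : 0 < s1) by (apply Rmin_glb_lt; lra).
  assert (Hs1a : s1 <= s0) by apply Rmin_l. assert (Hs1b : s1 <= dA) by apply Rmin_r.
  set (q := fun s => Rmin (/ (lam s * (lam s + 1))) (A s * s)).
  assert (Hbase : forall s, 0 < s < s1 ->
     0 < lam s /\ 0 < A s /\ lam s * (A s * s) < 1 /\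
     kap * q s * exp (- lam s) <= s /\ s <= (A s * s) * exp (- lam s) /\
     (1 <= lam s -> Rabs (C s - lam s * s) <= 11 * q s * exp (- lam s))).
  { intros s Hs. destruct (Hlam s ltac:(lra)) as [Hl [HS Hla]].
    assert (HAp : 0 < A s) by (apply HA0; lra).
    assert (Hla' : lam s * (A s * s) < 1) by (rewrite <- Rmult_assoc; exact Hla).
    pose proof (core s (lam s) (A s * s) (C s) ltac:(lra) Hl ltac:(nra) Hla' HS (HC s ltac:(lra))) as [B1 [B2 B3]].
    repeat split; auto. }
  assert (HK : forall s, 0 < s < s1 -> 1 <= lam s -> Rabs (C s - lam s * s) <= (11 / kap) * s).
  { intros s Hs H1. destruct (Hbase s Hs) as [_ [_ [_ [B1 [_ B3]]]]].
    eapply Rle_trans. apply B3; auto.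
    assert (E : 11 / kap * s = 11 / kap * s) by reflexivity.
    assert (0 <= 11 / kap) by (apply Rlt_le, Rdiv_lt_0_compat; lra).
    apply Rle_trans with (11 / kap * (kap * q s * exp (- lam s))).
    right. field. lra. apply Rmult_le_compat_l; auto. }
  assert (Haq : forall s, 0 < s < s1 -> A s * s <= (lam s + 1) * q s).
  { intros s Hs. destruct (Hbase s Hs) as [Hl [HAp [Hla _]]].
    unfold q, Rmin. destruct (Rle_dec (/ (lam s * (lam s + 1))) (A s * s)).
    - replace ((lam s + 1) * / (lam s * (lam s + 1))) with (/ lam s) by (field; lra).
      apply Rmult_le_reg_l with (lam s). lra. rewrite Rinv_r by lra. lra.
    - assert (0 < A s * s) by (apply Rmult_lt_0_compat; lra). nra. }
  assert (HKn : 0 <= 11 / kap) by (apply Rlt_le, Rdiv_lt_0_compat; lra).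
  split.
  -
    intros Hcase.
    assert (Hc : exists c, 0 < c <= 1 /\ exists dc, 0 < dc /\ forall s, 0 < s < dc -> c <= l s).
    { destruct Hcase as [[l0 [Hl0 Hlim]] | Hinf].
      - destruct (Hlim (l0 / 2) ltac:(lra)) as [dc [Hdc Hdc']].
        exists (Rmin (l0 / 2) 1). split. split. apply Rmin_glb_lt; lra. apply Rmin_r.
        exists dc. split; auto. intros s Hs. specialize (Hdc' s Hs). apply Rabs_def2 in Hdc'.
        pose proof (Rmin_l (l0 / 2) 1). lra.
      - destruct (Hinf 1) as [dc [Hdc Hdc']]. exists 1. split. lra. exists dc. split; auto.
        intros s Hs. specialize (Hdc' s Hs). lra. }
    destruct Hc as [c [Hc [dc [Hdc Hdc']]]].
    set (s2 := Rmin s1 dc).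
    assert (Hs2 : 0 < s2) by (apply Rmin_glb_lt; lra).
    assert (Hs2a : s2 <= s1) by apply Rmin_l. assert (Hs2b : s2 <= dc) by apply Rmin_r.
    assert (Hinv : forall s, 0 < s < s2 -> / s <= (lam s + 1) ^ 2 * exp (lam s) / (kap * c)).
    { intros s Hs. destruct (Hbase s ltac:(lra)) as [Hl [HAp [Hla [B1 [B2 _]]]]].
      assert (Hlc : c <= l s) by (apply Hdc'; lra). unfold l in Hlc.
      set (w := / lam s - A s * s) in *.
      assert (Hw : 0 < w).
      { unfold w. apply Rmult_lt_reg_l with (lam s). lra. rewrite Rmult_minus_distr_l, Rinv_r by lra. lra. }
      assert (Hw2 : w <= / (lam s + c)).
      { rewrite <- (Rinv_inv w). apply Rinv_le_contravar. nra. lra. }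
      assert (Ha : c * / (lam s * (lam s + 1)) <= A s * s).
      { assert (E : A s * s = / lam s - w) by (unfold w; ring). rewrite E.
        assert (/ lam s - / (lam s + c) = c / (lam s * (lam s + c))) by (field; lra).
        apply Rle_trans with (c / (lam s * (lam s + c))).
        unfold Rdiv. apply Rmult_le_compat_l. lra. apply Rinv_le_contravar; nra. lra. }
      assert (Hq : c * / (lam s * (lam s + 1)) <= q s).
      { unfold q. apply Rmin_glb; auto.
        assert (0 < / (lam s * (lam s + 1))) by (apply Rinv_0_lt_compat; nra). nra. }
      assert (Hs' : kap * (c * / (lam s * (lam s + 1))) * exp (- lam s) <= s).
      { eapply Rle_trans; [|exact B1]. apply Rmult_le_compat_r. apply Rlt_le, exp_pos.
        apply Rmult_le_compat_l; lra. }
      assert (Hexp : exp (- lam s) * exp (lam s) = 1) by (rewrite <- exp_plus; replace (- lam s + lam s) with 0 by ring; apply exp_0).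
      assert (HX : / (lam s * (lam s + 1)) * (lam s * (lam s + 1)) = 1) by (field; lra).
      pose proof (exp_pos (lam s)). pose proof (exp_pos (- lam s)).
      assert (Hpos : 0 < kap * (c * / (lam s * (lam s + 1))) * exp (- lam s)).
      { apply Rmult_lt_0_compat. apply Rmult_lt_0_compat. lra. apply Rmult_lt_0_compat. lra.
        apply Rinv_0_lt_compat; nra. auto. }
      apply Rle_trans with (/ (kap * (c * / (lam s * (lam s + 1))) * exp (- lam s))).
      apply Rinv_le_contravar; auto.
      apply Rle_trans with (lam s * (lam s + 1) * exp (lam s) / (kap * c)).
      + right. rewrite exp_Ropp. field. repeat split; try lra; try nra; apply Rgt_not_eq, exp_pos.
      + unfold Rdiv. apply Rmult_le_compat_r. apply Rlt_le, Rinv_0_lt_compat; nra.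
        apply Rmult_le_compat_r. lra. nra. }
    assert (Hkc : 0 < kap * c) by (apply Rmult_lt_0_compat; lra).
    apply (finish s2 lam C (fun s => ln (/ s)) (11 / kap) (- ln (kap * c))); auto.
    + assert (ln (kap * c) <= 0) by (rewrite <- ln_1; apply ln_le; nra). lra.
    + intros M. set (M1 := Rmax M 1).
      assert (HM1 : M <= M1 /\ 1 <= M1) by (split; [apply Rmax_l | apply Rmax_r]).
      pose proof (exp_pos M1) as He1.
      set (B := kap * c / ((M1 + 1) ^ 2 * exp M1)).
      assert (HB : 0 < B) by (apply Rdiv_lt_0_compat; auto; apply Rmult_lt_0_compat; [apply pow_lt; lra | auto]).
      exists (Rmin s2 B). split. apply Rmin_glb_lt; lra.
      intros s Hs. pose proof (Rmin_l s2 B). pose proof (Rmin_r s2 B).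
      destruct (Rle_or_lt M1 (lam s)) as [|Hlt]. lra. exfalso.
      destruct (Hbase s ltac:(lra)) as [Hl _].
      assert (Hi := Hinv s ltac:(lra)).
      assert (E1 : exp (lam s) < exp M1) by (apply exp_increasing; lra).
      assert (E2 : (lam s + 1) ^ 2 < (M1 + 1) ^ 2) by (simpl; nra).
      assert (E3 : (lam s + 1) ^ 2 * exp (lam s) < (M1 + 1) ^ 2 * exp M1).
      { pose proof (exp_pos (lam s)). assert (0 < (lam s + 1) ^ 2) by (apply pow_lt; lra). nra. }
      assert (E4 : (lam s + 1) ^ 2 * exp (lam s) / (kap * c) < / B).
      { unfold B. rewrite Rinv_div. unfold Rdiv. apply Rmult_lt_compat_r. apply Rinv_0_lt_compat; auto. exact E3. }
      assert (E5 : / B < / s) by (apply Rinv_lt_contravar; [nra | lra]).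
      lra.
    + intros s Hs H1. destruct (Hbase s ltac:(lra)) as [Hl [HAp [Hla [B1 [B2 _]]]]].
      split; [split|].
      * apply ln_lower.
        assert (Ha1 : A s * s <= 1) by (apply Rmult_le_reg_l with (lam s); nra).
        assert (Hs' : s <= / exp (lam s)).
        { rewrite <- exp_Ropp. pose proof (exp_pos (- lam s)). nra. }
        rewrite <- (Rinv_inv (exp (lam s))). apply Rinv_le_contravar; lra.
      * apply ln_upper; [apply Rinv_0_lt_compat; lra | exact Hkc | exact Hl | apply Hinv; lra].
      * apply HK; lra.
  - intros _.
    assert (HAup : forall s, 0 < s < s1 -> A s <= (lam s + 1) ^ 2 * exp (lam s) / kap).
    { intros s Hs. destruct (Hbase s Hs) as [Hl [HAp [Hla [B1 [B2 _]]]]].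
      pose proof (Haq s Hs) as Hq.
      pose proof (exp_pos (lam s)). pose proof (exp_pos (- lam s)).
      assert (Hexp : exp (- lam s) * exp (lam s) = 1) by (rewrite <- exp_plus; replace (- lam s + lam s) with 0 by ring; apply exp_0).
      assert (Hq2 : kap * q s <= s * exp (lam s)).
      { replace (kap * q s) with (kap * q s * exp (- lam s) * exp (lam s)).
        apply Rmult_le_compat_r; lra. rewrite Rmult_assoc, Hexp. ring. }
      assert (Hq3 : kap * (A s * s) <= (lam s + 1) * (s * exp (lam s))).
      { apply Rle_trans with ((lam s + 1) * (kap * q s)).
        replace ((lam s + 1) * (kap * q s)) with (kap * ((lam s + 1) * q s)) by ring.
        apply Rmult_le_compat_l; lra. apply Rmult_le_compat_l; lra. }
      assert (Hq4 : kap * A s <= (lam s + 1) * exp (lam s)).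
      { apply Rmult_le_reg_r with s. lra. nra. }
      assert (Hq5 : kap * A s <= (lam s + 1) ^ 2 * exp (lam s)) by (simpl; nra).
      apply Rmult_le_reg_l with kap. lra.
      replace (kap * ((lam s + 1) ^ 2 * exp (lam s) / kap)) with ((lam s + 1) ^ 2 * exp (lam s)) by (field; lra).
      exact Hq5. }
    apply (finish s1 lam C (fun s => ln (A s)) (11 / kap) (- ln kap)); auto.
    + assert (ln kap <= 0) by (rewrite <- ln_1; apply ln_le; lra). lra.
    + intros M. set (M1 := Rmax M 1).
      assert (HM1 : M <= M1 /\ 1 <= M1) by (split; [apply Rmax_l | apply Rmax_r]).
      pose proof (exp_pos M1) as He1.
      destruct (HA ((M1 + 1) ^ 2 * exp M1 / kap)) as [dB [HdB HdB']].
      exists (Rmin s1 dB). split. apply Rmin_glb_lt; lra.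
      intros s Hs. pose proof (Rmin_l s1 dB). pose proof (Rmin_r s1 dB).
      destruct (Rle_or_lt M1 (lam s)) as [|Hlt]. lra. exfalso.
      destruct (Hbase s ltac:(lra)) as [Hl _].
      assert (Hi := HAup s ltac:(lra)).
      assert (Hb := HdB' s ltac:(lra)).
      assert (E1 : exp (lam s) < exp M1) by (apply exp_increasing; lra).
      assert (E2 : (lam s + 1) ^ 2 < (M1 + 1) ^ 2) by (simpl; nra).
      assert (E3 : (lam s + 1) ^ 2 * exp (lam s) < (M1 + 1) ^ 2 * exp M1).
      { pose proof (exp_pos (lam s)). assert (0 < (lam s + 1) ^ 2) by (apply pow_lt; lra). nra. }
      assert (E4 : (lam s + 1) ^ 2 * exp (lam s) / kap < (M1 + 1) ^ 2 * exp M1 / kap).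
      { unfold Rdiv. apply Rmult_lt_compat_r. apply Rinv_0_lt_compat; lra. exact E3. }
      lra.
    + intros s Hs H1. destruct (Hbase s ltac:(lra)) as [Hl [HAp [Hla [B1 [B2 _]]]]].
      split; [split|].
      * apply ln_lower.
        pose proof (exp_pos (lam s)). pose proof (exp_pos (- lam s)).
        assert (Hexp : exp (- lam s) * exp (lam s) = 1) by (rewrite <- exp_plus; replace (- lam s + lam s) with 0 by ring; apply exp_0).
        assert (s * exp (lam s) <= A s * s) by
          (replace (A s * s) with (A s * s * exp (- lam s) * exp (lam s)) by (rewrite Rmult_assoc, Hexp; ring);
           apply Rmult_le_compat_r; lra).
        apply Rmult_le_reg_l with s. lra. nra.
      * apply ln_upper; [exact HAp | lra | exact Hl | apply HAup; lra].
      * apply HK; lra.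
Qed.
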